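(* Given $0<\epsilon<1/2$, there exists $C_1=C_1(\epsilon)>0$ such that for every $n$, every $0\le\eta<1/2$ and every $\mathbf{p},\mathbf{p}'\in[\epsilon,1-\epsilon]^n$ with $|p_i-p_i'|\ge\epsilon$ for all $i$, if $\bm\beta^*=(\beta_0,\dots,\beta_n)$ is the risk-minimizing linear solution of $(\mathbf{X},Y)$ for $(\mathbf{X},Y,Z)\sim\mathcal{D}^\eta_{\mathbf{p},\mathbf{p}'}$ and $\hat Y=\beta_0+\sum_{i=1}^n\beta_iX_i$, then $$\mathbb{P}_{(\mathbf{X},Y,Z)\sim\mathcal{D}^\eta_{\mathbf{p},\mathbf{p}'}}\big[\hat YZ\le0\big]\le\exp(-C_1n).$$
   Context: For $\mathbf{q}\in[0,1]^n$, $\mathcal{B}_{\mathbf{q}}$ is the law of independent $X_i\in\{-1,1\}$ with $\mathbb{P}[X_i=1]=q_i$. The toy distribution $\mathcal{D}^{\eta}_{\mathbf{p},\mathbf{p}'}$: sample $Z$ uniformly from $\{-1,1\}$; if $Z=1$ sample $\mathbf{X}\sim\mathcal{B}_{\mathbf{p}}$, else $\mathbf{X}\sim\mathcal{B}_{\mathbf{p}'}$; set $Y=Z$ with probability $1-\eta$ and $Y=-Z$ with probability $\eta$. The risk-minimizing linear solution is $\bm\beta^*=\arg\min_{\bm\beta}\mathbb{E}(\beta_0+\sum_i\beta_iX_i-Y)^2$. *)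

(* Defs.v *)
From mathcomp Require Import all_boot all_order all_algebra.
From mathcomp Require Import all_classical all_reals all_analysis.
Set Implicit Arguments. Unset Strict Implicit. Unset Printing Implicit Defensive.
Import Order.TTheory GRing.Theory Num.Theory.
Local Open Scope ring_scope.

(* A sign in {-1,1} is encoded by a boolean: true <-> +1, false <-> -1. *)
Definition sgnb {R : ringType} (b : bool) : R := if b then 1 else -1.

(* Outcomes (X, Y, Z) of the toy distribution, X in {-1,1}^n. *)
Definition outcome (n : nat) : finType :=
  ({ffun 'I_n -> bool} * bool * bool)%type.

(* Probability mass of the outcome (x,y,z) under D^eta_{p,p'}:
   Z uniform; X ~ B_p if Z = 1, X ~ B_p' if Z = -1 (independent coordinates,
   P[X_i = 1] = q_i); Y = Z w.p. 1-eta, Y = -Z w.p. eta. *)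
Definition toyD {R : realType} (n : nat) (eta : R) (p p' : 'I_n -> R)
    (w : outcome n) : R :=
  let: (x, y, z) := w in
  (1 / 2) *
  (\prod_(i < n) (let q := if z then p i else p' i in
                  if x i then q else 1 - q)) *
  (if y == z then 1 - eta else eta).

Definition linpred {R : realType} (n : nat) (b0 : R) (b : 'I_n -> R)
    (x : {ffun 'I_n -> bool}) : R :=
  b0 + \sum_(i < n) b i * sgnb (x i).

Definition risk {R : realType} (n : nat) (eta : R) (p p' : 'I_n -> R)
    (b0 : R) (b : 'I_n -> R) : R :=
  \sum_(w : outcome n)
     toyD eta p p' w * (linpred b0 b w.1.1 - sgnb w.1.2) ^+ 2.

Definition risk_minimizer {R : realType} (n : nat) (eta : R) (p p' : 'I_n -> R)
    (b0 : R) (b : 'I_n -> R) : Prop :=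
  forall (c0 : R) (c : 'I_n -> R), risk eta p p' b0 b <= risk eta p p' c0 c.

Definition err_prob {R : realType} (n : nat) (eta : R) (p p' : 'I_n -> R)
    (b0 : R) (b : 'I_n -> R) : R :=
  \sum_(w : outcome n | linpred b0 b w.1.1 * sgnb w.2 <= 0) toyD eta p p' w.

(* Main.v *)
Require Import Defs.
From mathcomp Require Import all_boot all_order all_algebra.
From mathcomp Require Import all_classical all_reals all_analysis.
From mathcomp Require Import ring lra.
Import Order.TTheory GRing.Theory Num.Theory.
Local Open Scope ring_scope.

Set Implicit Arguments. Unset Strict Implicit.
Section S.
Variable R : realType.

Definition piq (n : nat) (q : 'I_n -> R) (x : {ffun 'I_n -> bool}) : R :=
  \prod_(i < n) (if x i then q i else 1 - q i).

Lemma prod_sum n (q : 'I_n -> R) (h : 'I_n -> bool -> R) :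
  \sum_(x : {ffun 'I_n -> bool}) \prod_(i < n) ((if x i then q i else 1 - q i) * h i (x i))
  = \prod_(i < n) (q i * h i true + (1 - q i) * h i false).
Proof.
rewrite -(bigA_distr_bigA (fun i (b : bool) => (if b then q i else 1 - q i) * h i b)).
apply: eq_bigr => i _; by rewrite big_bool.
Qed.

Lemma piq_split n (q : 'I_n -> R) (h : 'I_n -> bool -> R) x :
  piq q x * \prod_(i < n) h i (x i) = \prod_(i < n) ((if x i then q i else 1 - q i) * h i (x i)).
Proof. by rewrite /piq -big_split. Qed.

Lemma E1 n (q : 'I_n -> R) : \sum_x piq q x = 1.
Proof.
transitivity (\sum_(x : {ffun 'I_n -> bool}) \prod_(i < n) ((if x i then q i else 1 - q i) * (fun _ _ => 1 : R) i (x i))).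
  by apply: eq_bigr => x _; rewrite /piq; apply: eq_bigr => i _; rewrite mulr1.
rewrite (prod_sum q (fun _ _ => 1)); apply: big1 => i _; lra.
Qed.

Lemma Es n (q : 'I_n -> R) j : \sum_x piq q x * sgnb (x j) = 2 * q j - 1.
Proof.
pose h := fun i (b : bool) => if i == j then sgnb b else 1 : R.
transitivity (\sum_(x : {ffun 'I_n -> bool}) \prod_(i < n) ((if x i then q i else 1 - q i) * h i (x i))).
  apply: eq_bigr => x _; rewrite -piq_split; congr (_ * _).
  rewrite (bigD1 j) //= big1 ?mulr1 /h ?eqxx // => i /negbTE ->; done.
rewrite prod_sum (bigD1 j) //= big1 ?mulr1 /h ?eqxx /sgnb; first lra.
by move=> i /negbTE ->; lra.
Qed.

Lemma Ess n (q : 'I_n -> R) i j : \sum_x piq q x * (sgnb (x i) * sgnb (x j)) =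
   if i == j then 1 else (2 * q i - 1) * (2 * q j - 1).
Proof.
case: eqP => [<-|/eqP ij].
  rewrite -(E1 q); apply: eq_bigr => x _; rewrite /sgnb; case: (x i); lra.
pose h := fun k (b : bool) => if k == i then sgnb b else if k == j then sgnb b else 1 : R.
transitivity (\sum_(x : {ffun 'I_n -> bool}) \prod_(k < n) ((if x k then q k else 1 - q k) * h k (x k))).
  apply: eq_bigr => x _; rewrite -piq_split; congr (_ * _).
  rewrite (bigD1 i) // (bigD1 j) /=; last by rewrite eq_sym.
  rewrite big1 ?mulr1 /h ?eqxx; first by rewrite eq_sym (negbTE ij).
  by move=> k /andP [/negbTE -> /negbTE ->].
rewrite prod_sum (bigD1 i) // (bigD1 j) /=; last by rewrite eq_sym.
rewrite big1 ?mulr1 /h ?eqxx; first by rewrite eq_sym (negbTE ij) /sgnb; lra.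
by move=> k /andP [/negbTE -> /negbTE ->]; lra.
Qed.


Lemma EL n (q : 'I_n -> R) b0 b :
  \sum_x piq q x * linpred b0 b x = b0 + \sum_i b i * (2 * q i - 1).
Proof.
rewrite /linpred.
have -> : \sum_x piq q x * (b0 + \sum_(i < n) b i * sgnb (x i))
   = b0 * \sum_x piq q x + \sum_i b i * \sum_x (piq q x * sgnb (x i)).
  symmetry; rewrite mulr_sumr.
  rewrite [X in _ + X](eq_bigr (fun i => \sum_x b i * (piq q x * sgnb (x i)))); last by move=> i _; rewrite mulr_sumr.
  rewrite (exchange_big) /= -big_split /=; apply: eq_bigr => x _.
  rewrite mulrDr mulr_sumr; congr (_ + _); first by rewrite mulrC.
  by apply: eq_bigr => i _; rewrite mulrCA.
rewrite E1 mulr1; congr (_ + _); apply: eq_bigr => i _; by rewrite Es.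
Qed.

Lemma EsL n (q : 'I_n -> R) b0 b j :
  \sum_x piq q x * (sgnb (x j) * linpred b0 b x) =
  b0 * (2 * q j - 1) + b j * (1 - (2 * q j - 1) ^+ 2)
  + (2 * q j - 1) * \sum_i b i * (2 * q i - 1).
Proof.
rewrite /linpred.
have -> : \sum_x piq q x * (sgnb (x j) * (b0 + \sum_(i < n) b i * sgnb (x i)))
   = b0 * \sum_x (piq q x * sgnb (x j)) + \sum_i b i * \sum_x (piq q x * (sgnb (x i) * sgnb (x j))).
  symmetry; rewrite mulr_sumr.
  rewrite [X in _ + X](eq_bigr (fun i => \sum_x b i * (piq q x * (sgnb (x i) * sgnb (x j))))); last by move=> i _; rewrite mulr_sumr.
  rewrite (exchange_big) /= -big_split /=; apply: eq_bigr => x _.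
  rewrite mulrDr mulrDr mulr_sumr mulr_sumr; congr (_ + _); first by ring.
  by apply: eq_bigr => i _; ring.
rewrite Es -addrA; congr (_ + _).
under eq_bigr do rewrite Ess.
have -> : \sum_i b i * (if i == j then 1 else (2 * q i - 1) * (2 * q j - 1))
  = \sum_i ((2 * q j - 1) * (b i * (2 * q i - 1)) + (if i == j then b j * (1 - (2 * q j - 1) ^+ 2) else 0)).
  by apply: eq_bigr => i _; case: eqP => [->|_]; ring.
rewrite big_split /= -mulr_sumr addrC; congr (_ + _).
by rewrite (bigD1 j) //= eqxx big1 ?addr0 // => i /negbTE ->.
Qed.

Lemma sum_toy n (eta : R) (p p' : 'I_n -> R) (G : outcome n -> R) :
  \sum_w toyD eta p p' w * G w =
  \sum_x (1 / 2 * piq p x * ((1 - eta) * G (x, true, true) + eta * G (x, false, true))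
        + 1 / 2 * piq p' x * (eta * G (x, true, false) + (1 - eta) * G (x, false, false))).
Proof.
have -> : \sum_w toyD eta p p' w * G w =
   \sum_(w : ({ffun 'I_n -> bool} * bool) * bool)
     (fun a (z : bool) => toyD eta p p' (a, z) * G (a, z)) w.1 w.2.
  by apply: eq_bigr => -[a z].
rewrite -(pair_bigA _ (fun a (z : bool) => toyD eta p p' (a, z) * G (a, z))) /=.
have -> : \sum_(a : {ffun 'I_n -> bool} * bool) \sum_(z : bool) toyD eta p p' (a, z) * G (a, z)
  = \sum_(a : {ffun 'I_n -> bool} * bool)
     (fun x (y : bool) => \sum_(z : bool) toyD eta p p' (x, y, z) * G (x, y, z)) a.1 a.2.
  by apply: eq_bigr => -[x y].
rewrite -(pair_bigA _ (fun x (y : bool) => \sum_(z : bool) toyD eta p p' (x, y, z) * G (x, y, z))) /=; apply: eq_bigr => x _.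
rewrite !big_bool /= /toyD /piq /=; ring.
Qed.


Lemma toyD_ge0 n (eta : R) (p p' : 'I_n -> R) w :
  0 <= eta <= 1 -> (forall i, 0 <= p i <= 1) -> (forall i, 0 <= p' i <= 1) ->
  0 <= toyD eta p p' w.
Proof.
move=> /andP [e0 e1] hp hp'; case: w => [[x y] z] /=.
apply: mulr_ge0; last by case: (y == z); lra.
apply: mulr_ge0; first lra.
apply: prodr_ge0 => i _; case: z; case: (x i).
- by case/andP: (hp i).
- by case/andP: (hp i) => _ h; lra.
- by case/andP: (hp' i).
- by case/andP: (hp' i) => _ h; lra.
Qed.

Lemma linpredD n (b0 c0 s : R) (b c : 'I_n -> R) x :
  linpred (b0 + s * c0) (fun i => b i + s * c i) x = linpred b0 b x + s * linpred c0 c x.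
Proof.
rewrite /linpred mulrDr mulr_sumr.
rewrite (eq_bigr (fun i => b i * sgnb (x i) + s * (c i * sgnb (x i)))); last by move=> i _; ring.
rewrite big_split /=; ring.
Qed.

Lemma NE n (eta : R) (p p' : 'I_n -> R) b0 b :
  0 <= eta <= 1 -> (forall i, 0 <= p i <= 1) -> (forall i, 0 <= p' i <= 1) ->
  risk_minimizer eta p p' b0 b -> forall c0 c,
  \sum_w toyD eta p p' w * ((linpred b0 b w.1.1 - sgnb w.1.2) * linpred c0 c w.1.1) = 0.
Proof.
move=> he hp hp' hmin c0 c.
set L := \sum_w _.
pose Q := \sum_w toyD eta p p' w * (linpred c0 c w.1.1) ^+ 2.
have Q0 : 0 <= Q by apply: sumr_ge0 => w _; apply: mulr_ge0; [exact: toyD_ge0|exact: sqr_ge0].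
have key : forall s, risk eta p p' (b0 + s * c0) (fun i => b i + s * c i)
    = risk eta p p' b0 b + 2 * s * L + s ^+ 2 * Q.
  move=> s; rewrite /risk /L /Q !mulr_sumr -!big_split /=; apply: eq_bigr => w _.
  rewrite linpredD; ring.
pose s := - L / (Q + 1).
have := hmin (b0 + s * c0) (fun i => b i + s * c i); rewrite key => H.
have H2 : 0 <= 2 * s * L + s ^+ 2 * Q by lra.
have Qn : Q + 1 != 0 by apply/negP => /eqP; lra.
have H3 : (Q + 1) ^+ 2 * (2 * s * L + s ^+ 2 * Q) = - (L ^+ 2 * (Q + 2)).
  rewrite /s; field; exact: Qn.
have H4 : 0 <= (Q + 1) ^+ 2 * (2 * s * L + s ^+ 2 * Q) by apply: mulr_ge0; [exact: sqr_ge0|].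
rewrite H3 in H4.
have H5 : L ^+ 2 * (Q + 2) <= 0 by lra.
have H6 : 0 <= L ^+ 2 * (Q + 2) by apply: mulr_ge0; [exact: sqr_ge0| lra].
have : L ^+ 2 * (Q + 2) = 0 by lra.
move/eqP; rewrite mulf_eq0 => /orP [|]; first by rewrite sqrf_eq0 => /eqP.
move/eqP => h; lra.
Qed.


Lemma NEsum n (eta : R) (p p' : 'I_n -> R) b0 b (h : {ffun 'I_n -> bool} -> R) :
  \sum_w toyD eta p p' w * ((linpred b0 b w.1.1 - sgnb w.1.2) * h w.1.1) =
  1 / 2 * (\sum_x piq p x * (h x * linpred b0 b x)) - 1 / 2 * (1 - 2 * eta) * (\sum_x piq p x * h x)
  + 1 / 2 * (\sum_x piq p' x * (h x * linpred b0 b x)) + 1 / 2 * (1 - 2 * eta) * (\sum_x piq p' x * h x).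
Proof.
rewrite sum_toy /=.
rewrite (eq_bigr (fun x => 1 / 2 * (piq p x * (h x * linpred b0 b x)) + (- (1 / 2 * (1 - 2 * eta))) * (piq p x * h x)
  + 1 / 2 * (piq p' x * (h x * linpred b0 b x)) + 1 / 2 * (1 - 2 * eta) * (piq p' x * h x))); last first.
  by move=> x _; rewrite /sgnb; ring.
rewrite !big_split /= -!mulr_sumr; ring.
Qed.

Lemma lin_one n (x : {ffun 'I_n -> bool}) : linpred 1 (fun _ => 0 : R) x = 1.
Proof. by rewrite /linpred big1 ?addr0 // => i _; rewrite mul0r. Qed.

Lemma lin_unit n (x : {ffun 'I_n -> bool}) j :
  linpred 0 (fun i => if i == j then 1 else 0 : R) x = sgnb (x j).
Proof.
rewrite /linpred add0r (bigD1 j) //= eqxx mul1r big1 ?addr0 // => i /negbTE ->.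
by rewrite mul0r.
Qed.


Lemma expR_quad (u : R) : u <= 1 / 2 -> expR u <= 1 + u + 2 * u ^+ 2.
Proof.
move=> hu.
have h := expR_ge1Dx (- u).
have hm : expR u * expR (- u) = 1 by rewrite -expRD addrN expR0.
have Eu : 0 < expR u := expR_gt0 u.
have h1 : expR u * (1 - u) <= 1.
  rewrite -hm; apply: ler_wpM2l; [exact: ltW| lra].
have h2 : 0 <= u ^+ 2 * (1 - 2 * u) by apply: mulr_ge0; [exact: sqr_ge0| lra].
have h3 : (1 - u) * (1 + u + 2 * u ^+ 2) = 1 + u ^+ 2 * (1 - 2 * u) by ring.
rewrite -(@ler_pM2l _ (1 - u)); last lra.
lra.
Qed.

Lemma factor_bound (e q v1 v0 : R) :
  0 < e -> e < 1 / 2 -> 0 <= q <= 1 ->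
  -1 <= e * v1 <= 1 -> -1 <= e * v0 <= 1 ->
  e ^+ 2 <= q * v1 + (1 - q) * v0 ->
  q * expR (- (e ^+ 4 / 4 * v1)) + (1 - q) * expR (- (e ^+ 4 / 4 * v0)) <= expR (- (e ^+ 6 / 8)).
Proof.
move=> e0 e1 /andP [q0 q1] /andP [a1 b1] /andP [a0 b0] hm.
set c := e ^+ 3 / 4.
have c0 : 0 < c by rewrite /c; apply: divr_gt0 => //; apply: exprn_gt0.
have e3 : e ^+ 3 <= 1.
  have : e ^+ 3 <= 1 ^+ 3 by apply: lerXn2r; rewrite ?nnegrE; lra.
  by rewrite expr1n.
have c1 : c <= 1 / 4 by rewrite /c; lra.
have tv : forall v, e ^+ 4 / 4 * v = c * (e * v) by move=> v; rewrite /c; ring.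
have fb : forall v, -1 <= e * v <= 1 ->
    expR (- (e ^+ 4 / 4 * v)) <= 1 - e ^+ 4 / 4 * v + 2 * c ^+ 2.
  move=> v /andP [av bv]; rewrite tv.
  have hu : - (c * (e * v)) <= 1 / 2 by nra.
  apply: le_trans (expR_quad hu) _.
  have ev1 : (e * v) ^+ 2 <= 1 by nra.
  have : (c * (e * v)) ^+ 2 <= c ^+ 2.
    by rewrite exprMn -[leRHS]mulr1; apply: ler_wpM2l => //; exact: sqr_ge0.
  lra.
have f1 := fb v1 (introT andP (conj a1 b1)).
have f0 := fb v0 (introT andP (conj a0 b0)).
have comb : q * expR (- (e ^+ 4 / 4 * v1)) + (1 - q) * expR (- (e ^+ 4 / 4 * v0))
   <= q * (1 - e ^+ 4 / 4 * v1 + 2 * c ^+ 2) + (1 - q) * (1 - e ^+ 4 / 4 * v0 + 2 * c ^+ 2).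
  by apply: lerD; apply: ler_wpM2l => //; lra.
have t0 : 0 <= e ^+ 4 / 4 by apply: divr_ge0 => //; apply: exprn_ge0; exact: ltW.
have hm2 : e ^+ 4 / 4 * e ^+ 2 <= e ^+ 4 / 4 * (q * v1 + (1 - q) * v0) by apply: ler_wpM2l.
have id1 : q * (1 - e ^+ 4 / 4 * v1 + 2 * c ^+ 2) + (1 - q) * (1 - e ^+ 4 / 4 * v0 + 2 * c ^+ 2)
   = 1 - e ^+ 4 / 4 * (q * v1 + (1 - q) * v0) + 2 * c ^+ 2 by ring.
have id2 : e ^+ 4 / 4 * e ^+ 2 = e ^+ 6 / 4 by ring.
have id3 : 2 * c ^+ 2 = e ^+ 6 / 8 by rewrite /c; field.
have := expR_ge1Dx (- (e ^+ 6 / 8)).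
lra.
Qed.

Lemma beta_form n (eta : R) (p p' : 'I_n -> R) b0 b :
  0 <= eta <= 1 -> (forall i, 0 <= p i <= 1) -> (forall i, 0 <= p' i <= 1) ->
  risk_minimizer eta p p' b0 b ->
  b0 = - ((\sum_i b i * (2 * p i - 1)) + \sum_i b i * (2 * p' i - 1)) / 2 /\
  forall j, b j * ((1 - (2 * p j - 1) ^+ 2) + (1 - (2 * p' j - 1) ^+ 2)) =
     (2 * p j - 1 - (2 * p' j - 1)) *
     ((1 - 2 * eta) - ((\sum_i b i * (2 * p i - 1)) - \sum_i b i * (2 * p' i - 1)) / 2).
Proof.
move=> he hp hp' hmin.
have N := NE he hp hp' hmin.
have N0 := N 1 (fun _ => 0).
rewrite (NEsum _ _ _ _ _ (linpred 1 (fun _ => 0))) in N0.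
have L1 : forall q : 'I_n -> R, \sum_x piq q x * (linpred 1 (fun _ => 0) x * linpred b0 b x) = b0 + \sum_i b i * (2 * q i - 1).
  move=> q; rewrite -EL; apply: eq_bigr => x _; congr (_ * _); rewrite -[RHS]mul1r; congr (_ * _). exact: lin_one.
have L2 : forall q : 'I_n -> R, \sum_x piq q x * linpred 1 (fun _ => 0) x = 1.
  move=> q; rewrite -[RHS](E1 q); apply: eq_bigr => x _; rewrite -[RHS]mulr1; congr (_ * _). exact: lin_one.
rewrite !L1 !L2 in N0.
have b0E : b0 = - ((\sum_i b i * (2 * p i - 1)) + \sum_i b i * (2 * p' i - 1)) / 2 by lra.
split => // j.
have Nj := N 0 (fun i => if i == j then 1 else 0).
rewrite (NEsum _ _ _ _ _ (linpred 0 (fun i => if i == j then 1 else 0))) in Nj.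
have L3 : forall q : 'I_n -> R, \sum_x piq q x * (linpred 0 (fun i => if i == j then 1 else 0) x * linpred b0 b x)
   = b0 * (2 * q j - 1) + b j * (1 - (2 * q j - 1) ^+ 2) + (2 * q j - 1) * \sum_i b i * (2 * q i - 1).
  move=> q; rewrite -EsL; apply: eq_bigr => x _; congr (_ * (_ * _)); exact: lin_unit.
have L4 : forall q : 'I_n -> R, \sum_x piq q x * linpred 0 (fun i => if i == j then 1 else 0) x = 2 * q j - 1.
  move=> q; rewrite -Es; apply: eq_bigr => x _; congr (_ * _); exact: lin_unit.
rewrite !L3 !L4 b0E in Nj.
set Sp := \sum_i b i * (2 * p i - 1) in Nj *.
set Sp' := \sum_i b i * (2 * p' i - 1) in Nj *.
move: Nj; set D := (1 - (2 * p j - 1) ^+ 2); set D' := (1 - (2 * p' j - 1) ^+ 2).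
move=> Nj.
lra.
Qed.


Definition dlt n (p p' : 'I_n -> R) i : R := (2 * p i - 1) - (2 * p' i - 1).
Definition D2 n (p p' : 'I_n -> R) i : R := (1 - (2 * p i - 1) ^+ 2) + (1 - (2 * p' i - 1) ^+ 2).
Definition mm n (p p' : 'I_n -> R) i : R := ((2 * p i - 1) + (2 * p' i - 1)) / 2.
Definition Yv n (p p' : 'I_n -> R) (z : bool) i (b : bool) : R :=
  sgnb z * (dlt p p' i / D2 p p' i) * (sgnb b - mm p p' i).

Lemma D2_ge n (e : R) (p p' : 'I_n -> R) i : 0 < e -> e < 1 / 2 ->
  e <= p i <= 1 - e -> e <= p' i <= 1 - e -> 4 * e <= D2 p p' i.
Proof.
move=> e0 e1 /andP [a1 b1] /andP [a2 b2]; rewrite /D2.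
have h1 : 0 <= (p i - e) * (1 - e - p i) by apply: mulr_ge0; lra.
have h2 : 0 <= (p' i - e) * (1 - e - p' i) by apply: mulr_ge0; lra.
have h3 : 0 <= e * (1 - 2 * e) by apply: mulr_ge0; lra.
nra.
Qed.

Lemma box2 (u m : R) (z b : bool) : -1/2 <= u <= 1/2 -> -1 <= m <= 1 ->
  -1 <= sgnb z * u * (sgnb b - m) <= 1.
Proof.
move=> /andP [u1 u2] /andP [m1 m2].
have h1 : 0 <= (u + 1/2) * (1 - m) by apply: mulr_ge0; lra.
have h2 : 0 <= (1/2 - u) * (1 - m) by apply: mulr_ge0; lra.
have h3 : 0 <= (u + 1/2) * (1 + m) by apply: mulr_ge0; lra.
have h4 : 0 <= (1/2 - u) * (1 + m) by apply: mulr_ge0; lra.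
by rewrite /sgnb; case: z; case: b; apply/andP; split; nra.
Qed.

Lemma factor_ok n (e : R) (p p' : 'I_n -> R) i (z : bool) :
  0 < e -> e < 1 / 2 ->
  e <= p i <= 1 - e -> e <= p' i <= 1 - e -> e <= `|p i - p' i| ->
  (if z then p i else p' i) * expR (- (e ^+ 4 / 4 * Yv p p' z i true))
  + (1 - (if z then p i else p' i)) * expR (- (e ^+ 4 / 4 * Yv p p' z i false))
  <= expR (- (e ^+ 6 / 8)).
Proof.
move=> e0 e1 hp hp' hd.
have Dg := D2_ge e0 e1 hp hp'.
have D0 : 0 < D2 p p' i by lra.
move: hp hp' => /andP [a1 b1] /andP [a2 b2].
have Dl : D2 p p' i <= 2 by rewrite /D2; have := sqr_ge0 (2 * p i - 1); have := sqr_ge0 (2 * p' i - 1); lra.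
set r := dlt p p' i / D2 p p' i.
have dl : -2 <= dlt p p' i <= 2 by rewrite /dlt; apply/andP; split; lra.
have ur : -1/2 <= e * r <= 1/2.
  move: dl => /andP [dl1 dl2].
  rewrite /r mulrA; apply/andP; split.
    by rewrite ler_pdivlMr //; nra.
  by rewrite ler_pdivrMr //; nra.
have mb : -1 <= mm p p' i <= 1 by rewrite /mm; apply/andP; split; lra.
apply: factor_bound => //.
- by case: z; apply/andP; split; lra.
- rewrite /Yv (_ : forall b, e * (sgnb z * r * (sgnb b - mm p p' i)) = sgnb z * (e * r) * (sgnb b - mm p p' i)); last by move=> b; ring.
  exact: box2.
- rewrite /Yv (_ : forall b, e * (sgnb z * r * (sgnb b - mm p p' i)) = sgnb z * (e * r) * (sgnb b - mm p p' i)); last by move=> b; ring.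
  exact: box2.
have mean : (if z then p i else p' i) * Yv p p' z i true + (1 - (if z then p i else p' i)) * Yv p p' z i false
   = r * dlt p p' i / 2.
  by rewrite /Yv /sgnb /mm /r /dlt; case: z => /=; field; lra.
rewrite mean.
have dsq : 4 * e ^+ 2 <= dlt p p' i ^+ 2.
  move: hd; rewrite /dlt ler_normr => /orP [h|h]; nra.
have -> : r * dlt p p' i / 2 = dlt p p' i ^+ 2 / (2 * D2 p p' i).
  have Dn : D2 p p' i != 0 by rewrite gt_eqF.
  by rewrite /r; field; rewrite Dn.
rewrite ler_pdivlMr; last by apply: mulr_gt0.
nra.
Qed.


Lemma pred_form n (eta : R) (p p' : 'I_n -> R) b0 b :
  0 <= eta -> eta < 1 / 2 -> (forall i, 0 <= p i <= 1) -> (forall i, 0 <= p' i <= 1) ->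
  (forall i, 0 < D2 p p' i) ->
  risk_minimizer eta p p' b0 b ->
  exists K, 0 < K /\ forall x, linpred b0 b x =
     K * \sum_i (dlt p p' i / D2 p p' i) * (sgnb (x i) - mm p p' i).
Proof.
move=> e0 e1 hp hp' hD hmin.
have he : 0 <= eta <= 1 by apply/andP; split; lra.
have [b0E bj] := beta_form he hp hp' hmin.
move: b0E bj.
set Sp := \sum_i b i * (2 * p i - 1).
set Sp' := \sum_i b i * (2 * p' i - 1).
set K := 1 - 2 * eta - (Sp - Sp') / 2.
move=> b0E bj.
have bj' : forall j, b j = dlt p p' j / D2 p p' j * K.
  move=> j; have Dn : D2 p p' j != 0 by rewrite gt_eqF.
  have := bj j; rewrite -/(D2 p p' j) -/(dlt p p' j) => h.
  apply: (mulIf Dn); rewrite h; field; exact: Dn.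
have SS : Sp - Sp' = K * \sum_i (dlt p p' i ^+ 2 / D2 p p' i).
  rewrite /Sp /Sp' -sumrB mulr_sumr; apply: eq_bigr => i _.
  rewrite bj' /dlt; field; rewrite gt_eqF //; exact: hD.
have T0 : 0 <= \sum_i (dlt p p' i ^+ 2 / D2 p p' i).
  apply: sumr_ge0 => i _; apply: divr_ge0; [exact: sqr_ge0| exact: ltW].
have Kpos : 0 < K.
  have HK : K = 1 - 2 * eta - (Sp - Sp') / 2 by [].
  rewrite SS in HK.
  move: HK T0; set T := \sum_i _ => HK T0.
  nra.
exists K; split => // x.
have Sm : Sp + Sp' = 2 * \sum_i b i * mm p p' i.
  by rewrite /Sp /Sp' -big_split mulr_sumr; apply: eq_bigr => i _; rewrite /mm /=; field.
rewrite /linpred mulr_sumr.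
rewrite [in RHS](eq_bigr (fun i => b i * sgnb (x i) - b i * mm p p' i)); last first.
  by move=> i _; rewrite bj'; ring.
rewrite sumrB; lra.
Qed.


Lemma chernoff n (q : 'I_n -> R) (Y : 'I_n -> bool -> R) (t c : R) :
  (forall i, 0 <= q i <= 1) ->
  (forall i, q i * expR (- (t * Y i true)) + (1 - q i) * expR (- (t * Y i false)) <= expR (- c)) ->
  \sum_x piq q x * expR (- (t * \sum_i Y i (x i))) <= expR (- (c * n%:R)).
Proof.
move=> hq hf.
have -> : \sum_x piq q x * expR (- (t * \sum_i Y i (x i))) =
   \sum_(x : {ffun 'I_n -> bool}) \prod_(i < n) ((if x i then q i else 1 - q i) * (fun i b => expR (- (t * Y i b))) i (x i)).
  apply: eq_bigr => x _; rewrite -(piq_split q (fun i b => expR (- (t * Y i b)))); congr (_ * _).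
  by rewrite mulr_sumr -sumrN expR_sum.
rewrite (prod_sum q (fun i b => expR (- (t * Y i b)))).
apply: (@le_trans _ _ (\prod_(i < n) expR (- c))).
  apply: ler_prod => i _; apply/andP; split; last exact: hf.
  have := hq i => /andP [h0 h1].
  by apply: addr_ge0; apply: mulr_ge0; rewrite ?expR_ge0 //; lra.
by rewrite prodr_const card_ord -expRM_natr mulNr.
Qed.

Lemma err_bound n (e eta : R) (p p' : 'I_n -> R) b0 b :
  0 < e -> e < 1 / 2 -> 0 <= eta -> eta < 1 / 2 ->
  (forall i, e <= p i <= 1 - e) -> (forall i, e <= p' i <= 1 - e) ->
  (forall i, e <= `|p i - p' i|) ->
  risk_minimizer eta p p' b0 b ->
  err_prob eta p p' b0 b <= expR (- (e ^+ 6 / 8 * n%:R)).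
Proof.
move=> e0 e1 h0 h1 hp hp' hd hmin.
have hp01 : forall i, 0 <= p i <= 1 by move=> i; have := hp i => /andP [a c]; apply/andP; split; lra.
have hp'01 : forall i, 0 <= p' i <= 1 by move=> i; have := hp' i => /andP [a c]; apply/andP; split; lra.
have he : 0 <= eta <= 1 by apply/andP; split; lra.
have hD : forall i, 0 < D2 p p' i.
  by move=> i; have := D2_ge e0 e1 (hp i) (hp' i); lra.
have [K [Kp Hpred]] := pred_form h0 h1 hp01 hp'01 hD hmin.
set t := e ^+ 4 / 4.
have t0 : 0 <= t by rewrite /t; apply: divr_ge0 => //; apply: exprn_ge0; exact: ltW.
pose G (w : outcome n) := expR (- (t * \sum_i Yv p p' w.2 i (w.1.1 i))).
have step1 : err_prob eta p p' b0 b <= \sum_w toyD eta p p' w * G w.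
  rewrite /err_prob big_mkcond /=; apply: ler_sum => w _.
  have tD := toyD_ge0 w he hp01 hp'01.
  case: ifP => hP; last by apply: mulr_ge0 => //; exact: expR_ge0.
  have HY : linpred b0 b w.1.1 * sgnb w.2 = K * \sum_i Yv p p' w.2 i (w.1.1 i).
    rewrite Hpred mulr_sumr mulr_sumr mulr_suml; apply: eq_bigr => i _; rewrite /Yv; ring.
  rewrite HY in hP.
  have S0 : \sum_i Yv p p' w.2 i (w.1.1 i) <= 0.
    move: hP; set S := \sum_i _ => hP; nra.
  have G1 : 1 <= G w.
    rewrite /G; have := expR_ge1Dx (- (t * \sum_i Yv p p' w.2 i (w.1.1 i))).
    move: S0; set S := \sum_i _ => S0.
    nra.
  by rewrite -{1}[toyD eta p p' w]mulr1; apply: ler_wpM2l.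
apply: (le_trans step1).
rewrite sum_toy /=.
rewrite (eq_bigr (fun x => 1 / 2 * (piq p x * expR (- (t * \sum_i Yv p p' true i (x i))))
   + 1 / 2 * (piq p' x * expR (- (t * \sum_i Yv p p' false i (x i)))))); last first.
  by move=> x _; rewrite /G /=; ring.
rewrite big_split /= -!mulr_sumr.
have c1 : \sum_x piq p x * expR (- (t * \sum_i Yv p p' true i (x i))) <= expR (- (e ^+ 6 / 8 * n%:R)).
  apply: chernoff => // i.
  exact: (factor_ok true e0 e1 (hp i) (hp' i) (hd i)).
have c2 : \sum_x piq p' x * expR (- (t * \sum_i Yv p p' false i (x i))) <= expR (- (e ^+ 6 / 8 * n%:R)).
  apply: chernoff => // i.
  exact: (factor_ok false e0 e1 (hp i) (hp' i) (hd i)).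
lra.
Qed.

Theorem mainTheorem8_aux (eps : R) :
  0 < eps -> eps < 1 / 2 ->
  exists C1 : R, 0 < C1 /\
    forall (n : nat) (eta : R) (p p' : 'I_n -> R),
      0 <= eta -> eta < 1 / 2 ->
      (forall i, eps <= p i <= 1 - eps) ->
      (forall i, eps <= p' i <= 1 - eps) ->
      (forall i, eps <= `|p i - p' i|) ->
      forall (b0 : R) (b : 'I_n -> R),
        risk_minimizer eta p p' b0 b ->
        err_prob eta p p' b0 b <= expR (- (C1 * n%:R)).
Proof.
move=> e0 e1; exists (eps ^+ 6 / 8); split.
  by apply: divr_gt0 => //; apply: exprn_gt0.
move=> n eta p p' h0 h1 hp hp' hd b0 b hmin.
exact: err_bound.
Qed.

End S.

Unset Implicit Arguments.

Theorem mainTheorem8 (R : realType) (eps : R) :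
  0 < eps -> eps < 1 / 2 ->
  exists C1 : R, 0 < C1 /\
    forall (n : nat) (eta : R) (p p' : 'I_n -> R),
      0 <= eta -> eta < 1 / 2 ->
      (forall i, eps <= p i <= 1 - eps) ->
      (forall i, eps <= p' i <= 1 - eps) ->
      (forall i, eps <= `|p i - p' i|) ->
      forall (b0 : R) (b : 'I_n -> R),
        risk_minimizer eta p p' b0 b ->
        err_prob eta p p' b0 b <= expR (- (C1 * n%:R)).
Proof. exact: (@mainTheorem8_aux R eps). Qed.
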